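(* For every graph $H$ with $\delta(H)\ge1$, either $str(H)=|V(H)|+\delta(H)$, or $H$ is a proper subgraph of a graph $G$ with $\delta(G)=\delta(H)$ and $str(G)=|V(G)|+\delta(G)$.
   Context: For a graph $G$ of order $p$, a numbering is a bijection $f:V(G)\to[1,p]$; $str_f(G)=\max\{f(u)+f(v): uv\in E(G)\}$ and $str(G)=\min_f str_f(G)$. $\delta(G)$ denotes the minimum degree. *)

(* Defs.v *)
From mathcomp Require Import all_boot.
Set Implicit Arguments. Unset Strict Implicit. Unset Printing Implicit Defensive.

Definition simple_graph (T : finType) (e : rel T) : Prop :=
  symmetric e /\ irreflexive e.

Definition deg (T : finType) (e : rel T) (v : T) : nat := #|[set u | e v u]|.

(* minimum degree delta(G); for the empty vertex set this is 0 *)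
Definition mindeg (T : finType) (e : rel T) : nat :=
  \big[minn/#|T|]_(v : T) deg e v.

(* A numbering: a bijection V -> [1,p], encoded as a bijection f : T -> 'I_p
   (p = #|T|) with label f v + 1. *)
Definition numbering (T : finType) (f : {ffun T -> 'I_#|T|}) : bool := injectiveb f.

Definition strf (T : finType) (e : rel T) (f : {ffun T -> 'I_#|T|}) : nat :=
  \max_(u : T) \max_(v : T | e u v) ((f u).+1 + (f v).+1).

(* str(G) = min over numberings f of str_f(G); numberings always exist and
   str_f <= 2p, so the default value 2p is never the result. *)
Definition strength (T : finType) (e : rel T) : nat :=
  \big[minn/(#|T|).*2]_(f : {ffun T -> 'I_#|T|} | numbering f) strf e f.

(* H = (T,e) is (isomorphic to) a proper subgraph of G = (T',e'):
   an injective edge-preserving map h, and G has an extra vertex or an extra edge. *)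
Definition proper_subgraph (T T' : finType) (e : rel T) (e' : rel T') : Prop :=
  exists h : T -> T',
    [/\ injective h,
        (forall u v, e u v -> e' (h u) (h v)) &
        (#|T| < #|T'| \/ exists u v, e' (h u) (h v) && ~~ e u v)].

(* Main.v *)
Require Import Defs.
From mathcomp Require Import all_boot.
From mathcomp Require Import zify.

Set Implicit Arguments. Unset Strict Implicit. Unset Printing Implicit Defensive.

Definition thr (n d : nat) : rel 'I_n :=
  fun x y => (x != y) && (x.+1 + y.+1 <= n + d).
Arguments thr : clear implicits.

Lemma widen_ord_inj n m (h : n <= m) : injective (widen_ord h).
Proof. by move=> x y /(congr1 val) /= /val_inj. Qed.

Lemma thr_simple n d : simple_graph (thr n d).
Proof.
split.
- move=> x y; rewrite /thr eq_sym addnC //.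
- by move=> x; rewrite /thr eqxx.
Qed.

Lemma card_small p j : j <= p -> #|[set i : 'I_p | i < j]| <= j.
Proof.
move=> hj.
apply: (@leq_trans #|[set widen_ord hj i | i in 'I_j]|).
  apply: subset_leq_card; apply/subsetP => y; rewrite inE => yj.
  by apply/imsetP; exists (Ordinal yj) => //; apply: val_inj.
by apply: leq_trans (leq_imset_card _ _) _; rewrite card_ord.
Qed.

Lemma thr_deg_ge n d (x : 'I_n) : d.+1 <= n -> d <= deg (thr n d) x.
Proof.
move=> hd.
have hd' : d <= n.-1 by lia.
pose g := fun i : 'I_d => lift x (widen_ord hd' i).
have ginj : injective g.
  by move=> i j /lift_inj /widen_ord_inj.
rewrite /deg -{1}(card_ord d) -(card_imset _ ginj).
apply: subset_leq_card; apply/subsetP => y /imsetP [i _ ->].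
rewrite inE /thr neq_lift /= /bump /=.
have := ltn_ord x; have := ltn_ord i.
case: leqP => /= hx; lia.
Qed.

Lemma thr_deg_top n d (x : 'I_n) : x.+1 = n -> d <= n -> deg (thr n d) x <= d.
Proof.
move=> hx hd; apply: leq_trans (card_small hd).
apply: subset_leq_card; apply/subsetP => y; rewrite !inE /thr => /andP [_].
lia.
Qed.

Lemma bigmin_ge (I : finType) (P : pred I) (F : I -> nat) k x0 :
  k <= x0 -> (forall i, P i -> k <= F i) -> k <= \big[minn/x0]_(i | P i) F i.
Proof.
move=> h0 hF; apply: (big_ind (fun x => k <= x)) => //.
by move=> a b ha hb; rewrite leq_min ha hb.
Qed.

Lemma bigmin_le (I : finType) (P : pred I) (F : I -> nat) x0 j :
  P j -> \big[minn/x0]_(i | P i) F i <= F j.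
Proof.
move=> Pj; rewrite unlock.
have : j \in index_enum I by rewrite mem_index_enum.
elim: (index_enum I) => [|a r IH] //= ; rewrite inE => /orP [/eqP <- | jr].
  by rewrite Pj geq_minl.
case: (P a) => //=; last exact: IH.
exact: leq_trans (geq_minr _ _) (IH jr).
Qed.

Lemma thr_mindeg n d : d < n -> mindeg (thr n d) = d.
Proof.
move=> hd; have n0 : n.-1 < n by lia.
apply/eqP; rewrite eqn_leq; apply/andP; split.
  rewrite /mindeg.
  have := bigmin_le (fun v => deg (thr n d) v) #|'I_n| (isT : predT (Ordinal n0)).
  move=> /leq_trans; apply.
  by apply: thr_deg_top => /=; lia.
apply: bigmin_ge; first by rewrite card_ord; lia.
by move=> i _; apply: thr_deg_ge.
Qed.

Lemma strf_ge (T : finType) (e : rel T) (f : {ffun T -> 'I_#|T|}) k :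
  numbering f -> 0 < k -> 0 < #|T| -> (forall v, k <= deg e v) ->
  #|T| + k <= strf e f.
Proof.
move=> /injectiveP finj k0 T0 hdeg.
have top : #|T|.-1 < #|T| by lia.
have := inj_card_onto finj (eq_leq (card_ord _)) (Ordinal top).
move=> /codomP [u hu].
have [/existsP [v /andP [euv hv]] | hno] := boolP [exists v, e u v && (k.-1 <= f v)].
  apply: leq_trans (leq_bigmax_cond u isT).
  apply: leq_trans (leq_bigmax_cond v euv).
  rewrite -hu /= prednK // leq_add2l; apply: leq_trans (leqSpred k) _; rewrite ltnS; exact: hv.
exfalso.
have : #|[set f v | v in [set w | e u w]]| <= k.-1.
  apply: leq_trans (card_small (_ : k.-1 <= #|T|)); last first.
    have := hdeg u; rewrite /deg => h.
    have : #|[set w | e u w]| <= #|T| by apply: max_card.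
    lia.
  apply: subset_leq_card; apply/subsetP => y /imsetP [w]; rewrite !inE => euw ->.
  move/existsPn: hno => /(_ w); rewrite euw /=; lia.
rewrite card_imset //; have := hdeg u; rewrite /deg; lia.
Qed.

Lemma thr_strength n d : 0 < d -> d < n -> strength (thr n d) = n + d.
Proof.
move=> d0 hd.
have c : n = #|'I_n| by rewrite card_ord.
pose fid : {ffun 'I_n -> 'I_#|'I_n|} := [ffun x => cast_ord c x].
have nfid : numbering fid.
  apply/injectiveP => x y; rewrite !ffunE => /(congr1 val) /= h; exact: val_inj.
apply/eqP; rewrite eqn_leq; apply/andP; split.
  rewrite /strength.
  have := bigmin_le (fun f => strf (thr n d) f) (#|'I_n|).*2 nfid.
  move=> /leq_trans; apply.
  apply/bigmax_leqP => u _; apply/bigmax_leqP => v; rewrite /thr !ffunE /=.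
  by case/andP.
apply: bigmin_ge; first by rewrite card_ord; lia.
move=> f nf; rewrite -[X in X + d]card_ord.
apply: strf_ge => //; first by rewrite card_ord; lia.
by move=> v; apply: thr_deg_ge.
Qed.

Theorem mainTheorem10 (T : finType) (e : rel T) :
  simple_graph e -> 1 <= mindeg e ->
  strength e = #|T| + mindeg e \/
  exists (T' : finType) (e' : rel T'),
    [/\ simple_graph e', proper_subgraph e e', mindeg e' = mindeg e &
        strength e' = #|T'| + mindeg e'].
Proof.
move=> [esym eirr] d1.
set d := mindeg e; set m := #|T|.
have hdm : d < m.
  case: (pickP (fun _ : T => true)) => [v _ | none].
    have : d <= deg e v.
      rewrite /d /mindeg.
      have := bigmin_le (fun v => deg e v) #|T| (isT : predT v).
      by [].
    rewrite /deg => hv; apply: leq_ltn_trans hv _.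
    have : [set u | e v u] \subset [set~ v].
      by apply/subsetP => u; rewrite !inE; apply: contraL => /eqP ->; rewrite eirr.
    move/subset_leq_card; rewrite cardsC1 -/m => h.
    have : 0 < m by rewrite /m; apply/card_gt0P; exists v.
    lia.
  have m0 : m = 0 by apply: eq_card0 => v; have := none v.
  move: d1; rewrite /d /mindeg big_pred0 //; by rewrite -/m m0.
right; exists 'I_(m + m), (thr (m + m) d).
have hmm : m <= m + m by apply: leq_addr.
rewrite (thr_mindeg (_ : d < m + m)); last by lia.
split => //.
- exact: thr_simple.
- exists (fun v => widen_ord hmm (enum_rank v)); split.
  + by move=> u v /widen_ord_inj /enum_rank_inj.
  + move=> u v euv; rewrite /thr /=; apply/andP; split.
      apply/negP => /eqP /widen_ord_inj /enum_rank_inj uv.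
      by move: euv; rewrite uv eirr.
    have hu : enum_rank u < #|T| := ltn_ord (enum_rank u).
    have hv : enum_rank v < #|T| := ltn_ord (enum_rank v).
    rewrite /m; exact: leq_trans (leq_add hu hv) (leq_addr _ _).
  + by left; rewrite card_ord; lia.
- by rewrite card_ord; apply: thr_strength; lia.
Qed.
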